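(* Let $m\geq 3$ be an integer. For polynomials $x(s)$ and $y(s)$ with complex coefficients such that $x$ is monic of degree $m$ and $\deg y\leq m$, let $p(x,y)(s)=(s^4+2s^2)x(s)+y(s)$. Then \[ \inf\{\alpha(p(x,y)) : x \text{ monic of degree } m,\ \deg y\le m\} = -\infty . \]
   Context: For a polynomial $q$ with complex coefficients, its abscissa is $\alpha(q)=\max\{\Re z : q(z)=0\}$. *)

(* Defs.v *)
From HB Require Import structures.
From mathcomp Require Import all_boot all_order all_algebra.
From mathcomp Require Import all_classical all_reals ereal.
From mathcomp Require Import complex.
Set Implicit Arguments. Unset Strict Implicit. Unset Printing Implicit Defensive.
Import Order.TTheory GRing.Theory Num.Theory.
Local Open Scope ring_scope.
Local Open Scope classical_set_scope.

(* abscissa q = max { Re z : q(z) = 0 }, taken in the extended reals as the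
   supremum of the (finite, for q nonzero nonconstant) set of real parts of
   roots of q. *)
Definition abscissa (R : realType) (q : {poly R[i]}) : \bar R :=
  ereal_sup [set (complex.Re z)%:E | z in [set z : R[i] | root q z]].

Definition pxy (R : realType) (x y : {poly R[i]}) : {poly R[i]} :=
  ('X^4 + 2%:R *: 'X^2) * x + y.

(* Main.v *)
Require Import Defs.
From HB Require Import structures.
From mathcomp Require Import zify.
From mathcomp Require Import all_boot all_order all_algebra.
From mathcomp Require Import all_classical all_reals ereal.
From mathcomp Require Import complex.
Import Order.TTheory GRing.Theory Num.Theory.
Local Open Scope ring_scope.
Local Open Scope classical_set_scope.

Section Aux.
Variable R : realType.

Let Q : {poly R[i]} := 'X^4 + 2%:R *: 'X^2.

Lemma sizeQ : size Q = 5%N.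
Proof.
rewrite /Q size_addl ?size_polyXn // (leq_ltn_trans (size_scale_leq _ _)) //.
by rewrite size_polyXn.
Qed.

Lemma lcQ : lead_coef Q = 1.
Proof.
rewrite /Q lead_coefDl ?lead_coefXn //.
by rewrite size_polyXn (leq_ltn_trans (size_scale_leq _ _)) // size_polyXn.
Qed.

Lemma exists_small (m : nat) (hm : (3 <= m)%N) (r : R) :
  exists xy : {poly R[i]} * {poly R[i]},
    [/\ xy.1 \is monic, size xy.1 = m.+1 & (size xy.2 <= m.+1)%N] /\
    (abscissa (pxy xy.1 xy.2) <= r%:E)%E.
Proof.
set P : {poly R[i]} := ('X - (r%:C)%C%:P) ^+ (m + 4).
have sP : size P = (m + 5)%N.
  by rewrite /P size_exp_XsubC; lia.
have Q0 : Q != 0 by rewrite -size_poly_eq0 sizeQ.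
have eP := divp_eq P Q.
have sr : (size (P %% Q)%R < 5)%N by rewrite -sizeQ; apply: ltn_modpN0.
have sd : size (P %/ Q) = m.+1 by rewrite size_divp // sP sizeQ; lia.
exists (P %/ Q, P %% Q); split; [split|] => /=.
- apply/monicP.
  have : lead_coef P = 1 by rewrite /P lead_coef_exp lead_coefXsubC expr1n.
  rewrite {1}eP lead_coefDl; last first.
    have d0 : P %/ Q != 0 by rewrite -size_poly_eq0 sd.
    rewrite size_mul // sizeQ sd addnS /=; apply: (leq_trans sr); lia.
  by rewrite lead_coefM lcQ mulr1.
- exact: sd.
- rewrite -ltnS; apply: (leq_trans sr); clear -hm; lia.
- have -> : pxy (P %/ Q) (P %% Q) = P by rewrite /pxy [in RHS]eP /Q mulrC.
  apply: ge_ereal_sup => _ [z /= Hz <-].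
  move: Hz; rewrite /root /P horner_exp !hornerE expf_eq0 subr_eq0 => /andP[_ /eqP ->].
  by [].
Qed.
End Aux.

Theorem mainTheorem2 (R : realType) (m : nat) (hm : (3 <= m)%N) :
  ereal_inf [set abscissa (pxy xy.1 xy.2) | xy in
     [set xy : {poly R[i]} * {poly R[i]} |
        [/\ xy.1 \is monic, size xy.1 = m.+1 & (size xy.2 <= m.+1)%N]]]
  = -oo%E.
Proof.
set S := [set _ | _ in _].
have H : forall r : R, (ereal_inf S <= r%:E)%E.
  move=> r; have [xy [Hxy Ha]] := @exists_small R m hm r.
  apply: le_trans Ha; apply: ereal_inf_lbound; by exists xy.
case E : (ereal_inf S) => [v| |] //.
- exfalso; have := H (v - 1); by rewrite E lee_fin lerBrDr gerDl ler10.
- by have := H 0; rewrite E.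
Qed.
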